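(* Let $(M,\cdot)$ be a moving semigroup and $A\subseteq M$. Then $A$ is DIP if and only if there is a nonprincipal idempotent ultrafilter $\mathcal{U}$ on $M$ with $A\in\mathcal{U}$.
   Context: $\beta M$ is the Stone–Čech compactification of the discrete semigroup $M$ (the space of ultrafilters on $M$, with principal ultrafilters identified with elements of $M$), equipped with the usual extension of the semigroup operation. $(M,\cdot)$ is moving if $\beta M\setminus M$ is a subsemigroup of $\beta M$. An ultrafilter $\mathcal{U}$ is idempotent if $\mathcal{U}\cdot\mathcal{U}=\mathcal{U}$ in $\beta M$. For a sequence $(x_n)$ in $M$, $\mathrm{FP}(x_n)=\{x_{i_1}\cdots x_{i_k}: k\ge1,\ i_1<\cdots<i_k\}$. A set $A\subseteq M$ is DIP (distinctly IP) if there is an injective sequence $(x_n)$ in $M$ with $\mathrm{FP}(x_n)\subseteq A$. *)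

(* Defs.v *)
From Stdlib Require Import List Sorted Arith.
Import ListNotations.

Set Implicit Arguments.

Section Defs.
Variable M : Type.

Definition is_ultrafilter (U : (M -> Prop) -> Prop) : Prop :=
  U (fun _ => True) /\
  ~ U (fun _ => False) /\
  (forall A B : M -> Prop, U A -> (forall x, A x -> B x) -> U B) /\
  (forall A B : M -> Prop, U A -> U B -> U (fun x => A x /\ B x)) /\
  (forall A : M -> Prop, U A \/ U (fun x => ~ A x)).

Definition principal_uf (a : M) : (M -> Prop) -> Prop := fun A => A a.

(* U is principal (i.e. is an element of M inside beta M) *)
Definition is_principal (U : (M -> Prop) -> Prop) : Prop :=
  exists a : M, U = principal_uf a.

Variable op : M -> M -> M.

Definition associative : Prop :=
  forall x y z, op x (op y z) = op (op x y) z.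

(* Extension of the operation to beta M (Hindman--Strauss convention):
   A in p.q  iff  { x | { y | x y in A } in q } in p. *)
Definition uf_mul (p q : (M -> Prop) -> Prop) : (M -> Prop) -> Prop :=
  fun A => p (fun x => q (fun y => A (op x y))).

(* (M,op) is moving: beta M \ M is a subsemigroup of beta M *)
Definition moving : Prop :=
  forall p q, is_ultrafilter p -> is_ultrafilter q ->
    ~ is_principal p -> ~ is_principal q -> ~ is_principal (uf_mul p q).

Definition idempotent_uf (U : (M -> Prop) -> Prop) : Prop :=
  uf_mul U U = U.

Definition list_prod (x : nat -> M) (i : nat) (l : list nat) : M :=
  fold_left (fun acc j => op acc (x j)) l (x i).

Definition FP (x : nat -> M) : M -> Prop :=
  fun y => exists (i : nat) (l : list nat),
    Sorted lt (i :: l) /\ y = list_prod x i l.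

Definition DIP (A : M -> Prop) : Prop :=
  exists x : nat -> M, (forall n m, x n = x m -> n = m) /\
    (forall y, FP x y -> A y).

End Defs.

(* Main.v *)
Require Import Defs.
From mathcomp Require classical_sets.
From Stdlib Require Import List Sorted Arith Lia Classical ClassicalEpsilon
  FunctionalExtensionality PropExtensionality.
Import ListNotations.
Set Implicit Arguments. Unset Strict Implicit.
Set Bullet Behavior "Strict Subproofs".

Lemma my_zorn (T : Type) (P : (T -> Prop) -> Prop) :
  (forall F : (T -> Prop) -> Prop, (forall X, F X -> P X) ->
     (forall X Y, F X -> F Y -> (forall t, X t -> Y t) \/ (forall t, Y t -> X t)) ->
     P (fun t => exists2 X, F X & X t)) ->
  exists A, P A /\ forall B, (forall t, A t -> B t) -> P B -> forall t, B t -> A t.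
Proof.
  intros H.
  destruct (@classical_sets.Zorn_bigcup T P) as [A [PA HA]].
  - intros F FP Ftot.
    assert (E : classical_sets.bigcup F (fun X => X) = (fun t => exists2 X, F X & X t)).
    { reflexivity. }
    rewrite E. apply H; [exact FP|]. intros X Y FX FY. exact (Ftot X Y FX FY).
  - exists A. split; [exact PA|]. intros B AB PB t Bt.
    apply NNPP; intro nAt. apply (HA B); [|exact PB].
    split; [exact AB|]. intro BA. apply nAt, BA, Bt.
Qed.

Section UF.
End UF.

Definition UFT (M : Type) := (M -> Prop) -> Prop.

Lemma uf_up {M} (p : UFT M) A B : is_ultrafilter p -> p A -> (forall x, A x -> B x) -> p B.
Proof. intros (_&_&H&_) ? ?; eapply H; eauto. Qed.

Lemma uf_inter {M} (p : UFT M) A B : is_ultrafilter p -> p A -> p B -> p (fun x => A x /\ B x).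
Proof. intros (_&_&_&H&_); auto. Qed.

Lemma uf_true {M} (p : UFT M) : is_ultrafilter p -> p (fun _ => True).
Proof. intros (H&_); auto. Qed.

Lemma uf_nonempty {M} (p : UFT M) A : is_ultrafilter p -> p A -> exists x, A x.
Proof.
  intros Hp HA. apply NNPP; intro N. destruct Hp as (_&H2&H3&_).
  apply H2. apply (H3 A); auto. intros x Ax; apply N; eauto.
Qed.

Lemma uf_not {M} (p : UFT M) A : is_ultrafilter p -> p A -> ~ p (fun x => ~ A x).
Proof.
  intros Hp HA HN. destruct (uf_nonempty Hp (uf_inter Hp HA HN)) as [x [h1 h2]]. auto.
Qed.

Lemma uf_compl {M} (p : UFT M) A : is_ultrafilter p -> ~ p A -> p (fun x => ~ A x).
Proof. intros Hp HA. destruct Hp as (_&_&_&_&H). destruct (H A); tauto. Qed.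

Lemma uf_eq {M} (p q : UFT M) : is_ultrafilter p -> is_ultrafilter q ->
  (forall A, p A -> q A) -> p = q.
Proof.
  intros Hp Hq H. apply functional_extensionality; intro A.
  apply propositional_extensionality; split; [apply H|].
  intro qA. apply NNPP; intro npA. apply (uf_not Hq qA). apply H. apply uf_compl; auto.
Qed.

Lemma uf_single {M} (p : UFT M) a : is_ultrafilter p -> p (fun y => y = a) -> p = principal_uf a.
Proof.
  intros Hp Ha. apply functional_extensionality; intro A.
  apply propositional_extensionality; unfold principal_uf; split.
  - intro pA. destruct (uf_nonempty Hp (uf_inter Hp Ha pA)) as [y [-> h]]; auto.
  - intro Aa. apply (uf_up Hp Ha). intros y ->; auto.
Qed.

Lemma uf_minus {M} (p : UFT M) B a : is_ultrafilter p -> ~ is_principal p -> p B ->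
  p (fun y => B y /\ y <> a).
Proof.
  intros Hp Hn HB. apply uf_inter; auto. apply NNPP; intro N.
  apply Hn. exists a. apply uf_single; auto.
  apply (uf_up Hp (uf_compl Hp N)). intros y h. apply NNPP; auto.
Qed.

Lemma uf_minus_list {M} (p : UFT M) B L : is_ultrafilter p -> ~ is_principal p -> p B ->
  p (fun y => B y /\ ~ In y L).
Proof.
  intros Hp Hn HB. induction L as [|a L IH].
  - apply (uf_up Hp HB). simpl; auto.
  - apply (uf_up Hp (uf_minus a Hp Hn IH)). simpl. intros y [[h1 h2] h3]; split; auto.
    intros [e|e]; auto.
Qed.

Lemma uf_mul_uf {M} (op : M -> M -> M) (p q : UFT M) :
  is_ultrafilter p -> is_ultrafilter q -> is_ultrafilter (uf_mul op p q).
Proof.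
  intros Hp Hq. unfold uf_mul. split; [|split; [|split; [|split]]].
  - apply (uf_up Hp (uf_true Hp)). intros; apply uf_true; auto.
  - intro H. destruct (uf_nonempty Hp H) as [x hx].
    destruct (uf_nonempty Hq hx) as [y hy]; auto.
  - intros A B HA HAB. apply (uf_up Hp HA). intros x hx. apply (uf_up Hq hx); auto.
  - intros A B HA HB. apply (uf_up Hp (uf_inter Hp HA HB)). intros x [h1 h2].
    apply (uf_inter Hq h1 h2).
  - intro A. destruct (classic (p (fun x => q (fun y => A (op x y))))) as [h|h]; [left; auto|right].
    apply (uf_up Hp (uf_compl Hp h)). intros x hx. apply uf_compl; auto.
Qed.

Lemma uf_mul_assoc {M} (op : M -> M -> M) (p q r : UFT M) : associative op ->
  uf_mul op (uf_mul op p q) r = uf_mul op p (uf_mul op q r).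
Proof.
  intros Ha. unfold uf_mul. apply functional_extensionality; intro A.
  f_equal. apply functional_extensionality; intro x. f_equal.
  apply functional_extensionality; intro y. f_equal.
  apply functional_extensionality; intro z. rewrite Ha; auto.
Qed.

Definition pfilter {M} (F : UFT M) : Prop :=
  F (fun _ => True) /\ ~ F (fun _ => False) /\
  (forall A B, F A -> (forall x, A x -> B x) -> F B) /\
  (forall A B, F A -> F B -> F (fun x => A x /\ B x)).

Lemma uf_lemma {M} (F : UFT M) : pfilter F -> exists p, is_ultrafilter p /\ forall A, F A -> p A.
Proof.
  intros HF.
  destruct (@my_zorn (M -> Prop) (fun G => pfilter (fun A => F A \/ G A))) as [G [PG HG]].
  - intros Fam FP Ftot. destruct HF as (h1&h2&h3&h4).
    split; [|split; [|split]].
    + auto.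
    + intros [h|[X FX h]]; auto. destruct (FP X FX) as (_&k&_); auto.
    + intros A B [h|[X FX h]] HAB; [left; eauto|].
      destruct (FP X FX) as (_&_&k&_). destruct (k A B (or_intror h) HAB) as [k'|k']; auto.
      right; exists X; auto.
    + intros A B [hA|[X FX hA]] [hB|[Y FY hB]].
      * left; auto.
      * destruct (FP Y FY) as (_&_&_&k). destruct (k A B (or_introl hA) (or_intror hB)); auto.
        right; exists Y; auto.
      * destruct (FP X FX) as (_&_&_&k). destruct (k A B (or_intror hA) (or_introl hB)); auto.
        right; exists X; auto.
      * destruct (Ftot X Y FX FY) as [s|s].
        -- destruct (FP Y FY) as (_&_&_&k). destruct (k A B (or_intror (s _ hA)) (or_intror hB)); auto.
           right; exists Y; auto.
        -- destruct (FP X FX) as (_&_&_&k). destruct (k A B (or_intror hA) (or_intror (s _ hB))); auto.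
           right; exists X; auto.
  - set (H := fun A => F A \/ G A) in *.
    assert (Hmax : forall A, ~ H A -> H (fun x => ~ A x)).
    { intros A nA. destruct PG as (g1&g2&g3&g4).
      set (G' := fun B => exists C, H C /\ forall x, C x -> A x -> B x).
      destruct (classic (exists C, H C /\ forall x, C x -> ~ A x)) as [[C [HC HCA]]|N].
      - apply (g3 C); auto.
      - exfalso. apply nA.
        assert (PG' : pfilter (fun B => F B \/ G' B)).
        { split; [|split; [|split]].
          - left; apply HF.
          - intros [h|[C [HC HCA]]]; [destruct HF as (_&k&_); auto|].
            apply N. exists C; split; [exact HC|]. intros x hx ha; exact (HCA x hx ha).
          - intros B B' [h|[C [HC HCA]]] HBB'.
            + right. exists B; split; [left; auto|]. intros; auto.
            + right. exists C; split; auto.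
          - intros B B' h h'.
            destruct h as [h|[C [HC HCA]]]; destruct h' as [h'|[C' [HC' HCA']]];
            right; [exists (fun x => B x /\ B' x); split; [apply g4; left; auto| auto]
                   | exists (fun x => B x /\ C' x); split; [apply g4; [left|]; auto| intros x [a b] c; split; auto]
                   | exists (fun x => C x /\ B' x); split; [apply g4; [|left]; auto| intros x [a b] c; split; auto]
                   | exists (fun x => C x /\ C' x); split; [apply g4; auto| intros x [a b] c; split; auto]]. }
        assert (HG' := HG G'). 
        assert (sub : forall B, G B -> G' B).
        { intros B GB. exists B; split; [right; auto| auto]. }
        specialize (HG' sub PG').
        assert (G' A) as GA.
        { exists (fun _ => True). split; [left; apply HF| auto]. }
        right. apply HG'. exact GA. }
    exists H. split.
    + destruct PG as (g1&g2&g3&g4). repeat split; auto.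
      intro A. destruct (classic (H A)); auto.
    + intros A h; left; auto.
Qed.
Definition closedS {M} (X : UFT M -> Prop) : Prop :=
  forall p, is_ultrafilter p -> (forall A, p A -> exists q, X q /\ q A) -> X p.

Lemma compactness {M} (I : Type) (X : I -> UFT M -> Prop) : inhabited I ->
  (forall i, closedS (X i) /\ (exists q, X i q) /\ forall q, X i q -> is_ultrafilter q) ->
  (forall i j, exists k, forall q, X k q -> X i q /\ X j q) ->
  exists p, is_ultrafilter p /\ forall i, X i p.
Proof.
  intros [i0] HX Hdir.
  set (F := fun A : M -> Prop => exists i, forall q, X i q -> q A).
  assert (PF : pfilter F).
  { split; [|split; [|split]].
    + exists i0. intros q hq. apply uf_true. apply (HX i0); auto.
    + intros [i hi]. destruct (HX i) as (_&[q hq]&hu).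
      destruct (uf_nonempty (hu q hq) (hi q hq)) as [x []].
    + intros A B [i hi] hAB. exists i. intros q hq.
      destruct (HX i) as (_&_&hu). apply (uf_up (hu q hq) (hi q hq)); auto.
    + intros A B [i hi] [j hj]. destruct (Hdir i j) as [k hk]. exists k.
      intros q hq. destruct (hk q hq). destruct (HX k) as (_&_&hu). apply uf_inter; [apply hu; auto|apply hi; auto|apply hj; auto]. }
  destruct (@uf_lemma M F PF) as [p [Hp HpF]].
  { exists p. split; auto. intro i. destruct (HX i) as (hc&hne&hu). apply hc; auto.
    intros A pA. apply NNPP; intro N.
    apply (uf_not Hp pA). apply HpF. exists i. intros q hq.
    apply uf_compl; auto. intro qA. apply N. eauto. }
Qed.
Definition subsg {M} (op : M -> M -> M) (X : UFT M -> Prop) : Prop :=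
  forall p q, X p -> X q -> X (uf_mul op p q).

Definition good {M} (op : M -> M -> M) (T X : UFT M -> Prop) : Prop :=
  (forall q, X q -> T q) /\ closedS X /\ (exists q, X q) /\ subsg op X.

Lemma minimal_exists {M} (op : M -> M -> M) (T : UFT M -> Prop) :
  (forall q, T q -> is_ultrafilter q) -> good op T T ->
  exists X0, good op T X0 /\
    forall X, good op T X -> (forall q, X q -> X0 q) -> forall q, X0 q -> X q.
Proof.
  intros HTu HT.
  destruct (@my_zorn (UFT M) (fun Y => good op T (fun p => T p /\ ~ Y p))) as [Y [PY HY]].
  - intros Fam FP Ftot.
    destruct HT as (t1&t2&t3&t4).
    split; [|split; [|split]].
    + intros q [h _]; auto.
    + intros p Hp Hcl. split.
      * apply t2; auto. intros A pA. destruct (Hcl A pA) as [q [[h1 h2] h3]]. eauto.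
      * intros [Z FZ Zp]. destruct (FP Z FZ) as (_&c&_).
        assert (HZ : T p /\ ~ Z p).
        { apply c; auto. intros A pA. destruct (Hcl A pA) as [q [[h1 h2] h3]].
          exists q; split; auto. split; auto. intro Zq. apply h2. exists Z; auto. }
        apply HZ; auto.
    +
      set (I := {Z : UFT M -> Prop | Z = (fun _ => False) \/ Fam Z}).
      set (XX := fun (i : I) p => T p /\ ~ proj1_sig i p).
      destruct (@compactness M I XX) as [p [Hp Hall]].
      * constructor. exists (fun _ => False). auto.
      * intros [Z HZ]. unfold XX; simpl. destruct HZ as [->|FZ].
        -- split; [|split].
           ++ intros p Hp Hcl. split; [|auto]. apply t2; auto. intros A pA.
              destruct (Hcl A pA) as [q [[h1 h2] h3]]; eauto.
           ++ destruct t3 as [q hq]; exists q; auto.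
           ++ intros q [h _]; auto.
        -- destruct (FP Z FZ) as (g1&g2&g3&g4). split; [exact g2|split; [exact g3|]].
           intros q [h _]; auto.
      * intros [Z1 H1] [Z2 H2].
        assert (Hsub : forall Z, Z = (fun _ => False) \/ Fam Z -> forall Z', Z' = (fun _ => False) \/ Fam Z' ->
                   (forall t, Z t -> Z' t) \/ (forall t, Z' t -> Z t)).
        { intros Z [->|FZ] Z' [->|FZ'];
          [left; intros t []|left; intros t []|right; intros t []|apply Ftot; auto]. }
        destruct (Hsub Z1 H1 Z2 H2) as [s|s].
        -- exists (exist _ Z2 H2). unfold XX; simpl. intros q [h1 h2]. split; split; auto.
        -- exists (exist _ Z1 H1). unfold XX; simpl. intros q [h1 h2]. split; split; auto.
      * exists p. split.
        -- apply (Hall (exist _ (fun _ => False) (or_introl eq_refl))).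
        -- intros [Z FZ Zp]. apply (Hall (exist _ Z (or_intror FZ))). exact Zp.
    + intros p q [hp np] [hq nq]. split; [apply t4; auto|].
      intros [Z FZ Zpq]. destruct (FP Z FZ) as (_&_&_&s).
      destruct (s p q) as [_ k]; [split; auto; intro; apply np; exists Z; auto
                                 |split; auto; intro; apply nq; exists Z; auto| auto].
  - exists (fun p => T p /\ ~ Y p). split; [exact PY|].
    intros X HX sub q [Tq nYq].
    apply NNPP; intro nXq.
    assert (E := HY (fun p => ~ X p)).
    assert (h1 : forall t, Y t -> ~ X t). { intros t Yt Xt. apply (sub t Xt); auto. }
    assert (h2 : good op T (fun p => T p /\ ~ ~ X p)).
    { destruct HX as (x1&x2&x3&x4). split; [|split; [|split]].
      - intros r [a _]; auto.
      - intros r Hr Hcl. assert (X r).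
        { apply x2; auto. intros A rA. destruct (Hcl A rA) as [s [[_ hs] hsA]].
          exists s; split; auto. apply NNPP; auto. }
        split; auto.
      - destruct x3 as [s hs]; exists s; auto.
      - intros a b [_ ha] [_ hb]. split; [apply x1|]; apply NNPP in ha; apply NNPP in hb; auto. }
    exact (nYq (E h1 h2 q nXq)).
Qed.
Lemma ellis {M} (op : M -> M -> M) (T : UFT M -> Prop) : associative op ->
  (forall q, T q -> is_ultrafilter q) -> good op T T ->
  exists p, T p /\ uf_mul op p p = p.
Proof.
  intros Ha HTu HT.
  destruct (minimal_exists HTu HT) as [X0 [HX0 Hmin]].
  destruct HX0 as (x1&x2&x3&x4).
  assert (Xu : forall q, X0 q -> is_ultrafilter q) by auto.
  destruct x3 as [p Xp].
  set (K := fun r => exists q, X0 q /\ r = uf_mul op q p).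
  assert (GK : good op T K).
  { split; [|split; [|split]].
    - intros r [q [hq ->]]. destruct HT as (_&_&_&t4). apply t4; auto.
    - intros r Hr Hcl.
      set (I := {A : M -> Prop | r A}).
      set (XX := fun (i : I) q => X0 q /\ q (fun x => p (fun y => proj1_sig i (op x y)))).
      destruct (@compactness M I XX) as [q0 [Hq0 Hall]].
      + constructor. exists (fun _ => True). apply uf_true; auto.
      + intros [A rA]. unfold XX; simpl. split; [|split].
        * intros s Hs Hcl'. split.
          -- apply x2; auto. intros B sB. destruct (Hcl' B sB) as [q [[h1 h2] h3]]; eauto.
          -- apply NNPP; intro N. destruct (Hcl' _ (uf_compl Hs N)) as [q [[h1 h2] h3]].
             exact (uf_not (Xu q h1) h2 h3).
        * destruct (Hcl A rA) as [r' [[q [hq ->]] h]]. exists q. split; auto.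
        * intros q [h _]; auto.
      + intros [A rA] [B rB]. exists (exist _ (fun x => A x /\ B x) (uf_inter Hr rA rB)).
        unfold XX; simpl. intros q [h1 h2]. split; split; auto.
        * apply (uf_up (Xu q h1) h2). intros x hx. apply (uf_up (Xu p Xp) hx). intros y []; auto.
        * apply (uf_up (Xu q h1) h2). intros x hx. apply (uf_up (Xu p Xp) hx). intros y []; auto.
      + exists q0. split.
        * apply (Hall (exist _ (fun _ => True) (uf_true Hr))).
        * apply uf_eq; [exact Hr| |].
          -- apply uf_mul_uf; [exact Hq0| apply Xu; exact Xp].
          -- intros A rA. apply (Hall (exist _ A rA)).
    - exists (uf_mul op p p). exists p; auto.
    - intros a b [q1 [h1 ->]] [q2 [h2 ->]].
      exists (uf_mul op (uf_mul op q1 p) q2). split.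
      + apply x4; auto.
      + rewrite (@uf_mul_assoc _ op (uf_mul op q1 p) q2 p Ha). reflexivity. }
  assert (pK : K p) by (apply (Hmin K GK); [intros r [q [hq ->]]; apply x4; auto| auto]).
  destruct pK as [q [Xq Eq]].
  set (L := fun s => X0 s /\ uf_mul op s p = p).
  assert (GL : good op T L).
  { split; [|split; [|split]].
    - intros s [h _]; auto.
    - intros s Hs Hcl. split.
      + apply x2; auto. intros A sA. destruct (Hcl A sA) as [t [[h1 h2] h3]]; eauto.
      + symmetry. apply uf_eq; [apply Xu; auto| |].
        * apply uf_mul_uf; auto.
        * intros A pA. unfold uf_mul. apply NNPP; intro N.
          destruct (Hcl _ (uf_compl Hs N)) as [t [[h1 h2] h3]].
          apply (uf_not (Xu t h1) (A := fun x => p (fun y => A (op x y)))); auto.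
          change (uf_mul op t p A). rewrite h2. auto.
    - exists q. split; auto.
    - intros a b [ha ea] [hb eb]. split; auto.
      rewrite uf_mul_assoc; auto. rewrite eb, ea; auto. }
  exists p. split; auto.
  destruct (Hmin L GL (fun s h => proj1 h) p Xp) as [_ E]. exact E.
Qed.
Definition FPn {M} (op : M -> M -> M) (x : nat -> M) (n : nat) : M -> Prop :=
  fun y => exists i l, n <= i /\ Sorted lt (i :: l) /\ y = Defs.list_prod op x i l.

Lemma fold_op {M} (op : M -> M -> M) (x : nat -> M) : associative op ->
  forall l a b, fold_left (fun acc j => op acc (x j)) l (op a b) =
                op a (fold_left (fun acc j => op acc (x j)) l b).
Proof.
  intros Ha l. induction l as [|c l IH]; intros a b; simpl; auto.
  rewrite <- Ha. apply IH.
Qed.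

Lemma lp_app {M} (op : M -> M -> M) (x : nat -> M) : associative op ->
  forall i l j l', Defs.list_prod op x i (l ++ j :: l') = op (Defs.list_prod op x i l) (Defs.list_prod op x j l').
Proof.
  intros Ha i l j l'. unfold Defs.list_prod. rewrite fold_left_app. simpl. apply fold_op; auto.
Qed.

Lemma sorted_app : forall l i j l', Sorted lt (i :: l) -> (forall a, In a (i :: l) -> a < j) ->
  Sorted lt (j :: l') -> Sorted lt (i :: l ++ j :: l').
Proof.
  induction l as [|c l IH]; intros i j l' H1 H2 H3; simpl.
  - constructor; auto. constructor. apply H2; simpl; auto.
  - inversion H1; subst. inversion H5; subst. constructor; auto.
    apply IH; auto. intros a ha. apply H2. simpl in *; tauto.
Qed.

Lemma bound_exists : forall l : list nat, exists k, forall a, In a l -> a <= k.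
Proof.
  induction l as [|c l [k hk]]; [exists 0; intros a []|].
  exists (Nat.max c k). intros a [->|h]; [lia|]. specialize (hk a h); lia.
Qed.

Lemma dip_to_uf {M} (op : M -> M -> M) (Hassoc : associative op) (Hmov : moving op) (A : M -> Prop) :
  DIP op A -> exists U, is_ultrafilter U /\ ~ is_principal U /\ idempotent_uf op U /\ U A.
Proof.
  intros [x [Hinj HFP]].
  set (T := fun p => is_ultrafilter p /\ ~ is_principal p /\ forall n, p (FPn op x n)).
  assert (HTu : forall q, T q -> is_ultrafilter q) by (intros q h; apply h).
  assert (GT : good op T T).
  { split; [|split; [|split]].
    - auto.
    - intros r Hr Hcl. split; [auto|split].
      + intros [a ->]. destruct (Hcl (fun y => y = a) eq_refl) as [q [[Hq [Hn _]] hq]].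
        apply Hn. exists a. apply uf_single; auto.
      + intro n. apply NNPP; intro N. destruct (Hcl _ (uf_compl Hr N)) as [q [[Hq [_ Hf]] hq]].
        exact (uf_not Hq (Hf n) hq).
    - set (F := fun B : M -> Prop => exists n, forall m, n <= m -> B (x m)).
      assert (PF : pfilter F).
      { split; [|split; [|split]].
        - exists 0; auto.
        - intros [n h]. apply (h n); auto.
        - intros B C [n h] hBC. exists n; auto.
        - intros B C [n h] [n' h']. exists (Nat.max n n'). intros m hm. split; [apply h|apply h']; lia. }
      destruct (uf_lemma PF) as [p [Hp HpF]].
      exists p. split; [auto|split].
      + intros [a E].
        assert (Fa : F (fun y => y <> a)).
        { destruct (classic (exists m0, x m0 = a)) as [[m0 hm0]|N].
          - exists (S m0). intros m hm e. assert (m = m0) by (apply Hinj; congruence). lia.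
          - exists 0. intros m _ e. apply N; eauto. }
        specialize (HpF _ Fa). rewrite E in HpF. apply HpF. reflexivity.
      + intro n. apply HpF. exists n. intros m hm. exists m, []. split; [exact hm|split; [constructor; auto|reflexivity]].
    - unfold subsg. intros p q Tp Tq. destruct Tp as [Hp [Hpn Hpf]]. destruct Tq as [Hq [Hqn Hqf]].
      split; [apply uf_mul_uf; auto|split].
      + apply Hmov; auto.
      + intro n. unfold uf_mul. apply (uf_up Hp (Hpf n)).
        intros y [i [l [hi [hs ->]]]].
        destruct (bound_exists (i :: l)) as [k hk].
        apply (uf_up Hq (Hqf (S k))). intros z [j [l' [hj [hs' ->]]]].
        exists i, (l ++ j :: l'). split; auto. split.
        * apply sorted_app; auto. intros a ha. specialize (hk a ha). lia.
        * rewrite lp_app; auto. }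
  destruct (ellis Hassoc HTu GT) as [p [[Hp [Hpn Hpf]] E]].
  exists p. split; auto. split; auto. split; auto.
  apply (uf_up Hp (Hpf 0)). intros y [i [l [_ [hs ->]]]]. apply HFP. exists i, l. auto.
Qed.
Definition star {M} (op : M -> M -> M) (U : UFT M) (C : M -> Prop) : M -> Prop :=
  fun y => C y /\ U (fun z => C (op y z)).

Definition gg_pick {M} (op : M -> M -> M) (U : UFT M) (a : M) (C : M -> Prop) (L : list M) : M :=
  epsilon (inhabits a) (fun y => star op U C y /\ ~ In y L).

Fixpoint gg_st {M} (op : M -> M -> M) (U : UFT M) (a : M) (A : M -> Prop) (n : nat)
  : (M -> Prop) * list M :=
  match n with
  | 0 => (A, nil)
  | S n => let s := gg_st op U a A n in
           let y := gg_pick op U a (fst s) (snd s) in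
           ((fun z => star op U (fst s) z /\ star op U (fst s) (op y z)), y :: snd s)
  end.

Lemma star_in {M} (op : M -> M -> M) (U : UFT M) C : is_ultrafilter U -> idempotent_uf op U ->
  U C -> U (star op U C).
Proof.
  intros Hu Hi HC. unfold star. apply uf_inter; auto.
  rewrite <- Hi in HC. exact HC.
Qed.

Lemma star_shift {M} (op : M -> M -> M) (U : UFT M) C y : associative op ->
  is_ultrafilter U -> idempotent_uf op U ->
  star op U C y -> U (fun z => star op U C (op y z)).
Proof.
  intros Ha Hu Hi [_ Hy].
  apply (uf_up Hu (star_in Hu Hi Hy)). intros z [h1 h2]. split; auto.
  apply (uf_up Hu h2). intros w hw. rewrite <- Ha. exact hw.
Qed.

Lemma uf_to_dip {M} (op : M -> M -> M) (Hassoc : associative op) (A : M -> Prop) :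
  (exists U, is_ultrafilter U /\ ~ is_principal U /\ idempotent_uf op U /\ U A) -> DIP op A.
Proof.
  intros [U [Hu [Hn [Hi HA]]]].
  destruct (uf_nonempty Hu HA) as [a _].
  set (C := fun n => fst (gg_st op U a A n)).
  set (L := fun n => snd (gg_st op U a A n)).
  set (xs := fun n => gg_pick op U a (C n) (L n)).
  set (D := fun n => star op U (C n)).
  assert (CS : forall n z, C (S n) z <-> D n z /\ D n (op (xs n) z)) by (intros; split; intro h; exact h).
  assert (LS : forall n, L (S n) = xs n :: L n) by reflexivity.
  assert (C0 : C 0 = A) by reflexivity.
  assert (Hgood : forall n, U (C n) /\ D n (xs n) /\ ~ In (xs n) (L n)).
  { intro n. induction n as [|n [IHC [IHD _]]].
    - assert (UC : U (C 0)) by (rewrite C0; auto).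
      split; auto.
      assert (Ex : exists y, star op U (C 0) y /\ ~ In y (L 0)).
      { apply (uf_nonempty Hu (uf_minus_list (L 0) Hu Hn (star_in Hu Hi UC))). }
      exact (epsilon_spec (inhabits a) _ Ex).
    - assert (UC : U (C (S n))).
      { apply (uf_up Hu (uf_inter Hu (star_in Hu Hi IHC) (star_shift Hassoc Hu Hi IHD))).
        intros z hz. apply CS. exact hz. }
      split; auto.
      assert (Ex : exists y, star op U (C (S n)) y /\ ~ In y (L (S n))).
      { apply (uf_nonempty Hu (uf_minus_list (L (S n)) Hu Hn (star_in Hu Hi UC))). }
      exact (epsilon_spec (inhabits a) _ Ex). }
  assert (Hin : forall m n, m < n -> In (xs m) (L n)).
  { intros m n. induction n as [|n IH]; intro h; [lia|].
    rewrite LS. destruct (Nat.eq_dec m n) as [->|ne]; [left; auto|right; apply IH; lia]. }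
  assert (Hmono : forall i j, i <= j -> forall z, C j z -> C i z).
  { intros i j h. induction h as [|j h IH]; auto. intros z hz. apply IH.
    apply CS in hz. destruct hz as [[h1 _] _]. exact h1. }
  assert (Hprod : forall l i, Sorted lt (i :: l) -> D i (Defs.list_prod op xs i l)).
  { induction l as [|j l IH]; intros i hs.
    - apply (Hgood i).
    - destruct (Sorted_inv hs) as [hs1 hd]. apply HdRel_inv in hd.
      change (j :: l) with ([] ++ j :: l). rewrite lp_app; auto.
      assert (hj : D j (Defs.list_prod op xs j l)) by (apply IH; auto).
      assert (hc : C (S i) (Defs.list_prod op xs j l)).
      { apply (Hmono (S i) j); [lia|]. exact (proj1 hj). }
      apply CS in hc. exact (proj2 hc). }
  exists xs. split.
  - intros n m E. destruct (Nat.lt_total n m) as [h|[h|h]]; auto.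
    + exfalso. destruct (Hgood m) as [_ [_ k]]. apply k. rewrite <- E. apply Hin; auto.
    + exfalso. destruct (Hgood n) as [_ [_ k]]. apply k. rewrite E. apply Hin; auto.
  - intros y [i [l [hs ->]]]. rewrite <- C0. apply (Hmono 0 i); [lia|].
    exact (proj1 (Hprod l i hs)).
Qed.

Theorem mainTheorem2 (M : Type) (op : M -> M -> M)
  (Hassoc : associative op) (Hmov : moving op) (A : M -> Prop) :
  DIP op A <->
  exists U : (M -> Prop) -> Prop,
    is_ultrafilter U /\ ~ is_principal U /\ idempotent_uf op U /\ U A.
Proof.
  split; [apply dip_to_uf; auto|apply uf_to_dip; auto].
Qed.
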